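(* Let $\epsilon\in(0,1)$, $u_0\in\mathbb{R}\setminus\{0,1,-1\}$, and let $h^*=\frac{8\epsilon^2}{u_0^2+4|u_0|+3}$ if $|u_0|>1$ and $h^*=\epsilon^2$ if $0<|u_0|<1$. For every $h\in(0,h^*]$, any real sequence $(u_n)_{n\ge0}$ starting at $u_0$ and satisfying the implicit midpoint scheme $$\frac{u_n-u_{n-1}}{h}+\frac{1}{\epsilon^2}f\!\left(\frac{u_n+u_{n-1}}{2}\right)=0,\qquad n\ge1,\quad f(u)=u^3-u,$$ satisfies $E(u_n)\le E(u_{n-1})$ for all $n\ge1$, where $E(v)=\frac{1}{4\epsilon^2}(v^2-1)^2$.
   Context: The scheme discretizes the ODE $u'(t)+\frac{1}{\epsilon^2}(u^3-u)=0$, $u(0)=u_0$. For $h\le2\epsilon^2$ each step equation has a unique real solution. *)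

(* Defs.v *)
From Stdlib Require Import Reals Lra.
Open Scope R_scope.

Definition f (u : R) : R := u ^ 3 - u.

Definition E (eps v : R) : R := (v ^ 2 - 1) ^ 2 / (4 * eps ^ 2).

Definition hstar (eps u0 : R) : R :=
  if Rlt_dec 1 (Rabs u0) then 8 * eps ^ 2 / (u0 ^ 2 + 4 * Rabs u0 + 3)
  else eps ^ 2.

Definition midpoint_step (eps h uprev unext : R) : Prop :=
  (unext - uprev) / h + / eps ^ 2 * f ((unext + uprev) / 2) = 0.

(* Main.v *)
Require Import Defs.
From Stdlib Require Import Reals Lra Psatz.
Open Scope R_scope.

Lemma hstar_le (eps u0 : R) : 0 < eps -> hstar eps u0 <= eps ^ 2.
Proof.
  intros He. unfold hstar. destruct (Rlt_dec 1 (Rabs u0)) as [H|H]; [|lra].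
  assert (Hp : 0 < eps ^ 2) by (apply pow_lt; lra).
  assert (Hd : 8 < u0 ^ 2 + 4 * Rabs u0 + 3).
  { assert (u0 ^ 2 = Rabs u0 ^ 2) by (unfold Rabs; destruct (Rcase_abs u0); ring). nra. }
  apply Rmult_le_reg_r with (u0 ^ 2 + 4 * Rabs u0 + 3); [lra|].
  unfold Rdiv. rewrite Rmult_assoc, Rinv_l by lra. nra.
Qed.

Lemma key (k m : R) : 0 < k <= 4 ->
  k * m^2 * (m^2-1)^2 * (-4 + k^2 * (m^2 * (1 - m^2))) <= 0.
Proof.
  intros Hk.
  assert (H1 : m^2 * (1 - m^2) <= 1/4) by (pose proof (pow2_ge_0 (m^2 - 1/2)); nra).
  assert (Hk2 : k^2 <= 16) by nra.
  assert (H2 : k^2 * (m^2 * (1 - m^2)) <= 4).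
  { destruct (Rle_dec 0 (m^2 * (1 - m^2))); nra. }
  assert (H3 : 0 <= k * m^2 * (m^2-1)^2).
  { apply Rmult_le_pos; [apply Rmult_le_pos; [lra| apply pow2_ge_0] | apply pow2_ge_0]. }
  nra.
Qed.

Theorem theorem3p8 (eps u0 h : R) (u : nat -> R) :
  0 < eps < 1 ->
  u0 <> 0 -> u0 <> 1 -> u0 <> -1 ->
  0 < h <= hstar eps u0 ->
  u 0%nat = u0 ->
  (forall n : nat, (1 <= n)%nat -> midpoint_step eps h (u (n - 1)%nat) (u n)) ->
  forall n : nat, (1 <= n)%nat -> E eps (u n) <= E eps (u (n - 1)%nat).
Proof.
  intros He _ _ _ Hh _ Hstep n Hn.
  pose proof (hstar_le eps u0 (proj1 He)) as Hs.
  specialize (Hstep n Hn). unfold midpoint_step, Defs.f in Hstep.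
  set (a := u (n-1)%nat) in *. set (b := u n) in *.
  assert (Hp : 0 < eps ^ 2) by (apply pow_lt; lra).
  set (k := h / eps ^ 2).
  assert (Hk : 0 < k <= 4).
  { unfold k; split.
    - apply Rdiv_lt_0_compat; lra.
    - apply Rmult_le_reg_r with (eps ^ 2); [lra|].
      unfold Rdiv. rewrite Rmult_assoc, Rinv_l by lra. lra. }
  set (m := (b + a) / 2) in *.
  assert (Hd : b - a = - k * (m ^ 3 - m)).
  { replace (b - a) with (h * ((b - a) / h)) by (field; lra).
    replace ((b - a) / h) with (- (/ eps ^ 2 * (m ^ 3 - m))) by lra.
    unfold k, Rdiv; ring. }
  unfold E. unfold Rdiv. apply Rmult_le_compat_r.
  { apply Rlt_le, Rinv_0_lt_compat. lra. }
  set (d := b - a) in *.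
  assert (Ha : a = m - d / 2) by (unfold m, d; field).
  assert (Hb : b = m + d / 2) by (unfold m, d; field).
  rewrite Ha, Hb.
  pose proof (key k m Hk) as K.
  apply Rminus_le.
  replace ((m + d * / 2) ^ 2 - 1) with ((m + d / 2) ^ 2 - 1) by (unfold Rdiv; ring).
  replace (((m + d / 2) ^ 2 - 1) ^ 2 - ((m - d / 2) ^ 2 - 1) ^ 2)
    with (2 * m * d * (2 * m^2 - 2 + d^2 / 2)) by field.
  rewrite Hd.
  replace (2 * m * (- k * (m ^ 3 - m)) * (2 * m ^ 2 - 2 + (- k * (m ^ 3 - m)) ^ 2 / 2))
    with (k * m^2 * (m^2-1)^2 * (-4 + k^2 * (m^2 * (1 - m^2)))) by field.
  exact K.
Qed.
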